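(* In the setting of the context, the inclusion maps $\Gamma(F_{xz},R_{xz})\hookrightarrow\Gamma(G_1,S_1)$ and $\Gamma(F_{yz},R_{yz})\hookrightarrow\Gamma(G_1,S_1)$ of Cayley graphs are isometric embeddings. Moreover, for all $g_0\in F_{xz}$, $g_1\in F_{yz}$ and $h\in H$, we have $|g_0h|_{S_1}\ge|g_0|_{S_1}$ and $|g_1h|_{S_1}\ge|g_1|_{S_1}$.
   Context: $H$ is a finitely presented group with finite generating set $T$, containing a free subgroup $F$ of rank $p$ with free basis $R=\{d_1,\dots,d_p\}\subset T$ (standing assumption: $\mathrm{Dist}_F^H$ admits an exponentially bounded sequence of palindromic certificates in $F$). $F_x,F_y,F_z$ are free of rank $p$ with bases $R_x=\{x_i\}$, $R_y=\{y_i\}$, $R_z=\{z_i\}$. $G_1=[H\ast_{\langle d_i=x_iy_i^{-1}\rangle}(F_x\times F_y\times F_z)]\times\langle s_1\rangle$, the amalgamation identifying $d_i$ with $x_iy_i^{-1}$. Set $a_i=x_iz_i$, $b_i=y_iz_i$, $R_{xz}=\{a_i\}$, $R_{yz}=\{b_i\}$, $F_{xz}=\langle R_{xz}\rangle$, $F_{yz}=\langle R_{yz}\rangle$ (free of rank $p$), and $S_1=T\cup R_x\cup R_y\cup R_z\cup R_{xz}\cup R_{yz}\cup\{s_1\}$. $|g|_S$ denotes word length with respect to $S$. *)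

(* Defs.v *)
(* groups are given by presentations; group
   elements are represented by words, group equality is the congruence
   generated by free cancellation and the relators. *)
From mathcomp Require Import all_boot.
Set Implicit Arguments. Unset Strict Implicit. Unset Printing Implicit Defensive.

(* A word over an alphabet A: letters (a, false) = a, (a, true) = a^{-1}. *)
Definition word (A : Type) := seq (A * bool).

Definition linv {A : Type} (l : A * bool) : A * bool := (l.1, ~~ l.2).
Definition winv {A : Type} (w : word A) : word A := rev (map linv w).
Definition wmap {A B : Type} (f : A -> B) (w : word A) : word B :=
  map (fun l => (f l.1, l.2)) w.
Definition wsubst {A B : Type} (f : A -> word B) (w : word A) : word B :=
  flatten (map (fun l => if l.2 then winv (f l.1) else f l.1) w).

Fixpoint reduced {A : eqType} (w : word A) : bool :=
  match w with
  | x :: ((y :: _) as t) => ~~ ((y.1 == x.1) && (y.2 != x.2)) && reduced t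
  | _ => true
  end.

Inductive weq {A : Type} (Rel : word A -> Prop) : word A -> word A -> Prop :=
| weq_refl w : weq Rel w w
| weq_sym u v : weq Rel u v -> weq Rel v u
| weq_trans u v w : weq Rel u v -> weq Rel v w -> weq Rel u w
| weq_free u v a : weq Rel (u ++ [:: a; linv a] ++ v) (u ++ v)
| weq_rel u v r : Rel r -> weq Rel (u ++ r ++ v) (u ++ v).

Definition comm {A : Type} (a b : A) : word A :=
  [:: (a, false); (b, false); (a, true); (b, true)].

(* Generators of G_1 = [H *_{d_i = x_i y_i^{-1}} (F_x x F_y x F_z)] x <s_1> *)
Inductive gen1 (T : Type) (p : nat) : Type :=
| G1T of T | G1X of 'I_p | G1Y of 'I_p | G1Z of 'I_p | G1S.
Arguments G1S {T p}.

(* Relators of G_1: those of H, the amalgamation d_i = x_i y_i^{-1}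
   (as the relator d_i y_i x_i^{-1}), commutation of the three free factors,
   and centrality of s_1. *)
Inductive rel1 (T : eqType) (p : nat) (relH : seq (word T)) (d : 'I_p -> T)
  : word (gen1 T p) -> Prop :=
| rel1_H r : r \in relH -> rel1 relH d (wmap (@G1T T p) r)
| rel1_amalg i : rel1 relH d [:: (G1T p (d i), false); (G1Y T i, false); (G1X T i, true)]
| rel1_xy i j : rel1 relH d (comm (G1X T i) (G1Y T j))
| rel1_xz i j : rel1 relH d (comm (G1X T i) (G1Z T j))
| rel1_yz i j : rel1 relH d (comm (G1Y T i) (G1Z T j))
| rel1_s g : rel1 relH d (comm G1S g).

Definition G1eq (T : eqType) (p : nat) (relH : seq (word T)) (d : 'I_p -> T) :=
  weq (rel1 relH d).

Definition wa (T : Type) (p : nat) (i : 'I_p) : word (gen1 T p) :=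
  [:: (G1X T i, false); (G1Z T i, false)].
Definition wb (T : Type) (p : nat) (i : 'I_p) : word (gen1 T p) :=
  [:: (G1Y T i, false); (G1Z T i, false)].

(* Letters of S_1 = T u R_x u R_y u R_z u R_xz u R_yz u {s_1} *)
Inductive sgen1 (T : Type) (p : nat) : Type :=
| SG of gen1 T p | SA of 'I_p | SB of 'I_p.

Definition evalS1 (T : Type) (p : nat) (s : sgen1 T p) : word (gen1 T p) :=
  match s with
  | SG g => [:: (g, false)]
  | SA i => wa T i
  | SB i => wb T i
  end.

Definition lenS1_le (T : eqType) (p : nat) (relH : seq (word T)) (d : 'I_p -> T)
  (w : word (gen1 T p)) (n : nat) : Prop :=
  exists s : word (sgen1 T p), size s <= n /\ G1eq relH d (wsubst (@evalS1 T p) s) w.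

Definition lenRxz_le (T : eqType) (p : nat) (relH : seq (word T)) (d : 'I_p -> T)
  (w : word (gen1 T p)) (n : nat) : Prop :=
  exists s : word 'I_p, size s <= n /\ G1eq relH d (wsubst (@wa T p) s) w.

Definition lenRyz_le (T : eqType) (p : nat) (relH : seq (word T)) (d : 'I_p -> T)
  (w : word (gen1 T p)) (n : nat) : Prop :=
  exists s : word 'I_p, size s <= n /\ G1eq relH d (wsubst (@wb T p) s) w.

Definition distS1_le (T : eqType) (p : nat) (relH : seq (word T)) (d : 'I_p -> T)
  (g h : word (gen1 T p)) (n : nat) :=
  @lenS1_le T p relH d (winv g ++ h) n.
Definition distRxz_le (T : eqType) (p : nat) (relH : seq (word T)) (d : 'I_p -> T)
  (g h : word (gen1 T p)) (n : nat) :=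
  @lenRxz_le T p relH d (winv g ++ h) n.
Definition distRyz_le (T : eqType) (p : nat) (relH : seq (word T)) (d : 'I_p -> T)
  (g h : word (gen1 T p)) (n : nat) :=
  @lenRyz_le T p relH d (winv g ++ h) n.

(* Main.v *)
Require Import Defs.
From mathcomp Require Import all_boot.
Set Implicit Arguments. Unset Strict Implicit. Unset Printing Implicit Defensive.

Lemma wsubst_cat (A B : Type) (f : A -> word B) u v :
  wsubst f (u ++ v) = wsubst f u ++ wsubst f v.
Proof. by rewrite /wsubst map_cat flatten_cat. Qed.

Lemma wsubst_cons (A B : Type) (f : A -> word B) l w :
  wsubst f (l :: w) = (if l.2 then winv (f l.1) else f l.1) ++ wsubst f w.
Proof. by []. Qed.

Lemma winv_cat (A : Type) (u v : word A) : winv (u ++ v) = winv v ++ winv u.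
Proof. by rewrite /winv map_cat rev_cat. Qed.

Lemma winv_cons (A : Type) l (w : word A) : winv (l :: w) = winv w ++ [:: linv l].
Proof. by rewrite /winv /= rev_cons cats1. Qed.

Lemma winvK (A : Type) (w : word A) : winv (winv w) = w.
Proof.
elim: w => [//|l w IH]; rewrite winv_cons winv_cat IH.
by case: l => a b; rewrite /winv /linv /= negbK.
Qed.

Lemma size_winv (A : Type) (w : word A) : size (winv w) = size w.
Proof. by rewrite /winv size_rev size_map. Qed.

Lemma wsubst_winv (A B : Type) (f : A -> word B) w :
  wsubst f (winv w) = winv (wsubst f w).
Proof.
elim: w => [//|[a b] w IH]; rewrite winv_cons wsubst_cat IH wsubst_cons winv_cat.
rewrite /linv /= cats0; case: b => //=; by rewrite winvK.
Qed.

Lemma wsubst_comp (A B C : Type) (f : A -> word B) (g : B -> word C) w :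
  wsubst g (wsubst f w) = wsubst (fun a => wsubst g (f a)) w.
Proof.
elim: w => [//|[a b] w IH]; rewrite !wsubst_cons wsubst_cat IH /=.
by case: b => //; rewrite wsubst_winv.
Qed.

Lemma wsubst_ext (A B : Type) (f g : A -> word B) w :
  (forall a, f a = g a) -> wsubst f w = wsubst g w.
Proof.
move=> H; elim: w => [//|l w IH]; by rewrite !wsubst_cons IH H.
Qed.

Lemma wsubst_wmap (A B C : Type) (g : A -> B) (f : B -> word C) w :
  wsubst f (wmap g w) = wsubst (fun a => f (g a)) w.
Proof. elim: w => [//|l w IH]; by rewrite /wmap /= -/(wmap g w) !wsubst_cons IH. Qed.

Lemma wsubst_nil (A B : Type) (w : word A) : wsubst (fun _ => [::] : word B) w = [::].
Proof. by elim: w => [//|l w IH]; rewrite wsubst_cons IH; case: l.2. Qed.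

Lemma wsubst_id (A : Type) (w : word A) : wsubst (fun i => [:: (i, false)]) w = w.
Proof. elim: w => [//|[a b] w IH]; rewrite wsubst_cons IH; by case: b. Qed.

Lemma wsubst_size (A B : Type) (f : A -> word B) w :
  (forall a, size (f a) <= 1) -> size (wsubst f w) <= size w.
Proof.
move=> H; elim: w => [//|l w IH]; rewrite wsubst_cons size_cat /=.
have : size (if l.2 then winv (f l.1) else f l.1) <= 1.
  by case: l.2; rewrite ?size_winv H.
move=> h; rewrite -addn1 addnC; exact: leq_add.
Qed.

Section W.
Variables (A : Type) (R : word A -> Prop).

Lemma weq_ctx u v x y : weq R u v -> weq R (x ++ u ++ y) (x ++ v ++ y).
Proof.
elim=> {u v}.
- by move=> w; apply: weq_refl.
- by move=> u v _ IH; apply: weq_sym.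
- by move=> u v w _ IH1 _ IH2; apply: weq_trans IH2.
- move=> u v a.
  have -> : x ++ (u ++ [:: a; linv a] ++ v) ++ y = (x ++ u) ++ [:: a; linv a] ++ (v ++ y)
    by rewrite !catA.
  have -> : x ++ (u ++ v) ++ y = (x ++ u) ++ (v ++ y) by rewrite !catA.
  exact: weq_free.
- move=> u v r Hr.
  have -> : x ++ (u ++ r ++ v) ++ y = (x ++ u) ++ r ++ (v ++ y) by rewrite !catA.
  have -> : x ++ (u ++ v) ++ y = (x ++ u) ++ (v ++ y) by rewrite !catA.
  exact: weq_rel.
Qed.

Lemma weq_cat u u' v v' : weq R u u' -> weq R v v' -> weq R (u ++ v) (u' ++ v').
Proof.
move=> H1 H2; apply: (@weq_trans _ _ _ (u' ++ v)).
  exact: (weq_ctx [::] v H1).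
by have := weq_ctx u' [::] H2; rewrite !cats0.
Qed.

Lemma weq_inv_r w : weq R (w ++ winv w) [::].
Proof.
elim: w => [|l w IH]; first exact: weq_refl.
rewrite winv_cons /= catA.
apply: (@weq_trans _ _ _ ([:: l] ++ [::] ++ [:: linv l])).
  by have := weq_ctx [:: l] [:: linv l] IH; rewrite /= -catA.
exact: (weq_free R [::] [::] l).
Qed.

Lemma weq_inv_l w : weq R (winv w ++ w) [::].
Proof. by have := weq_inv_r (winv w); rewrite winvK. Qed.
End W.

Lemma weq_hom (A B : Type) (R : word A -> Prop) (R' : word B -> Prop) (f : A -> word B) :
  (forall r, R r -> weq R' (wsubst f r) [::]) ->
  forall u v, weq R u v -> weq R' (wsubst f u) (wsubst f v).
Proof.
move=> Hf u v; elim=> {u v}.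
- by move=> w; apply: weq_refl.
- by move=> u v _ IH; apply: weq_sym.
- by move=> u v w _ IH1 _ IH2; apply: weq_trans IH2.
- move=> u v a; rewrite !wsubst_cat.
  have H : weq R' (wsubst f [:: a; linv a]) [::].
    rewrite /wsubst /= cats0; case: a.2 => /=.
      exact: weq_inv_l.
    exact: weq_inv_r.
  by have := weq_ctx (wsubst f u) (wsubst f v) H.
- move=> u v r Hr; rewrite !wsubst_cat.
  by have := weq_ctx (wsubst f u) (wsubst f v) (Hf r Hr).
Qed.

Definition phi0 (T : Type) (p : nat) (g : gen1 T p) : word 'I_p :=
  match g with G1Z i => [:: (i, false)] | _ => [::] end.

Lemma phi0_rel (T : eqType) (p : nat) relH (d : 'I_p -> T) r :
  rel1 relH d r -> weq (fun _ => False) (wsubst (@phi0 T p) r) [::].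
Proof.
case=> {r}.
- move=> r _; rewrite wsubst_wmap (wsubst_ext _ (g := fun _ => [::])) //.
  rewrite wsubst_nil; exact: weq_refl.
- move=> i; exact: weq_refl.
- move=> i j; exact: weq_refl.
- move=> i j; exact: (weq_free _ [::] [::] (j, false)).
- move=> i j; exact: (weq_free _ [::] [::] (j, false)).
- move=> g; rewrite /comm /wsubst /= cats0; exact: weq_inv_r.
Qed.

Lemma free_to_G1 (T : eqType) (p : nat) relH (d : 'I_p -> T) (c : 'I_p -> word (gen1 T p)) u v :
  weq (fun _ => False) u v -> G1eq relH d (wsubst c u) (wsubst c v).
Proof. by apply: weq_hom => r []. Qed.

Section Key.
Variables (T : eqType) (p : nat) (relH : seq (word T)) (d : 'I_p -> T).
Variables (c : 'I_p -> word (gen1 T p)) (sg : 'I_p -> sgen1 T p).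
Hypothesis hc : forall i, wsubst (@phi0 T p) (c i) = [:: (i, false)].
Hypothesis hs : forall i, evalS1 (sg i) = c i.

Definition psi (a : sgen1 T p) : word 'I_p := wsubst (@phi0 T p) (evalS1 a).

Lemma psi_size a : size (psi a) <= 1.
Proof. by case: a => [[t|i|i|i|]|i|i]. Qed.

Lemma phic u : wsubst (@phi0 T p) (wsubst c u) = u.
Proof. by rewrite wsubst_comp (wsubst_ext _ hc) wsubst_id. Qed.

Lemma toS1 s : wsubst (@evalS1 T p) (wmap sg s) = wsubst c s.
Proof. by rewrite wsubst_wmap (wsubst_ext _ hs). Qed.

Lemma key s x u : wsubst (@phi0 T p) x = u ->
  G1eq relH d (wsubst (@evalS1 T p) s) x ->
  G1eq relH d (wsubst c (wsubst psi s)) (wsubst c u).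
Proof.
move=> hx H; apply: free_to_G1; rewrite /psi -wsubst_comp -hx.
exact: (weq_hom (@phi0_rel T p relH d) H).
Qed.

Lemma iso u v n : distS1_le relH d (wsubst c u) (wsubst c v) n <->
  exists s : word 'I_p, size s <= n /\
    G1eq relH d (wsubst c s) (winv (wsubst c u) ++ wsubst c v).
Proof.
split.
- case=> s [hs1 H]; exists (wsubst psi s); split.
    exact: leq_trans (wsubst_size _ psi_size) hs1.
  have := key (u := winv u ++ v) _ H.
  rewrite !wsubst_cat !wsubst_winv !phic; by apply.
- case=> s [h H]; exists (wmap sg s); by rewrite size_map toS1.
Qed.

Lemma Hpart u h n : lenS1_le relH d (wsubst c u ++ wmap (@G1T T p) h) n ->
  lenS1_le relH d (wsubst c u) n.
Proof.
case=> s [hs1 H]; exists (wmap sg (wsubst psi s)); rewrite size_map toS1; split.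
  exact: leq_trans (wsubst_size _ psi_size) hs1.
apply: (key (u := u) _ H).
rewrite wsubst_cat phic wsubst_wmap (wsubst_ext _ (g := fun _ => [::])) //.
by rewrite wsubst_nil cats0.
Qed.
End Key.

Theorem lemma3p2
  (T : finType) (relH : seq (word T)) (p : nat) (d : 'I_p -> T)
  (d_inj : injective d)
  (F_free : forall u : word 'I_p, u != [::] -> reduced u ->
              ~ weq (fun r => r \in relH) (wmap d u) [::]) :
  (* Gamma(F_xz, R_xz) -> Gamma(G_1, S_1) is an isometric embedding *)
  (forall (u v : word 'I_p) (n : nat),
     distS1_le relH d (wsubst (@wa T p) u) (wsubst (@wa T p) v) n <->
     distRxz_le relH d (wsubst (@wa T p) u) (wsubst (@wa T p) v) n) /\
  (* Gamma(F_yz, R_yz) -> Gamma(G_1, S_1) is an isometric embedding *)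
  (forall (u v : word 'I_p) (n : nat),
     distS1_le relH d (wsubst (@wb T p) u) (wsubst (@wb T p) v) n <->
     distRyz_le relH d (wsubst (@wb T p) u) (wsubst (@wb T p) v) n) /\
  (* |g_0 h|_{S_1} >= |g_0|_{S_1} for g_0 in F_xz, h in H *)
  (forall (u : word 'I_p) (h : word T) (n : nat),
     lenS1_le relH d (wsubst (@wa T p) u ++ wmap (@G1T T p) h) n ->
     lenS1_le relH d (wsubst (@wa T p) u) n) /\
  (* |g_1 h|_{S_1} >= |g_1|_{S_1} for g_1 in F_yz, h in H *)
  (forall (u : word 'I_p) (h : word T) (n : nat),
     lenS1_le relH d (wsubst (@wb T p) u ++ wmap (@G1T T p) h) n ->
     lenS1_le relH d (wsubst (@wb T p) u) n).
Proof.
have ha : forall i, wsubst (@phi0 T p) (wa T i) = [:: (i, false)] by [].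
have hb : forall i, wsubst (@phi0 T p) (wb T i) = [:: (i, false)] by [].
have sa : forall i, evalS1 (@SA T p i) = wa T i by [].
have sb : forall i, evalS1 (@SB T p i) = wb T i by [].
split; first by move=> u v n; exact: (iso relH d ha sa).
split; first by move=> u v n; exact: (iso relH d hb sb).
split; first by move=> u h n; exact: (Hpart ha sa).
by move=> u h n; exact: (Hpart hb sb).
Qed.
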